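(* Let $\epsilon:B\to A$ be a local augmentation and let $\alpha$, $\beta$ be invertible matrices over $B$ of sizes $n\times n$ and $m\times m$ with $\epsilon(\alpha)$ and $\epsilon(\beta)$ identity matrices. Then $D(\alpha\oplus\beta)=D(\alpha)D(\beta)$ in $\epsilon^{-1}(1)/C_0$.
   Context: Rings are associative with $1$. A local augmentation is a ring homomorphism $\epsilon:B\to A$ with a ring homomorphism $j:A\to B$, $\epsilon j=\mathrm{id}_A$, such that every square matrix over $B$ whose image under $\epsilon$ is invertible is itself invertible. $C_0$ is the subgroup of units of $B$ generated by $\{(1+ab)(1+ba)^{-1}\mid a,b\in B,\ \epsilon(a)=0\}$; it is a normal subgroup of $\epsilon^{-1}(1)$ with abelian quotient. $\alpha\oplus\beta$ is the block diagonal matrix. For an invertible $n\times n$ matrix $\gamma$ over $B$ with $\epsilon(\gamma)$ the identity, $D(\gamma)\in\epsilon^{-1}(1)/C_0$ is defined recursively: if $n=1$, $D(\gamma)$ is the class of $\gamma$; if $n\ge2$, write $\gamma=\begin{pmatrix}\gamma_{11}&\gamma_{12}\\ \gamma_{21}&\gamma_{22}\end{pmatrix}$ with $\gamma_{11}$ of size $1\times1$ (invertible since $\epsilon(\gamma_{11})=1$) and set $D(\gamma)=\gamma_{11}D(\gamma_{22}-\gamma_{21}\gamma_{11}^{-1}\gamma_{12})$. *)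

(* Defs.v *)
From HB Require Import structures.
From mathcomp Require Import all_boot all_order all_algebra.
Set Implicit Arguments. Unset Strict Implicit. Unset Printing Implicit Defensive.
Import GRing.Theory.
Local Open Scope ring_scope.

Definition mx_invertible (R : pzRingType) (n : nat) (M : 'M[R]_n) : Prop :=
  exists N : 'M[R]_n, M *m N = 1%:M /\ N *m M = 1%:M.

Definition local_augmentation (B A : nzRingType)
    (eps : {rmorphism B -> A}) (j : {rmorphism A -> B}) : Prop :=
  (forall a : A, eps (j a) = a) /\
  (forall (n : nat) (M : 'M[B]_n), mx_invertible (map_mx eps M) -> mx_invertible M).

Inductive inC0 (B : unitRingType) (A : nzRingType) (eps : {rmorphism B -> A}) : B -> Prop :=
  | C0_gen a b : eps a = 0 -> inC0 eps ((1 + a * b) * (1 + b * a)^-1)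
  | C0_one : inC0 eps 1
  | C0_mul x y : inC0 eps x -> inC0 eps y -> inC0 eps (x * y)
  | C0_inv x : inC0 eps x -> inC0 eps x^-1.

(* Equality of classes x C_0 = y C_0 in eps^{-1}(1)/C_0. *)
Definition eqC0 (B : unitRingType) (A : nzRingType) (eps : {rmorphism B -> A})
    (x y : B) : Prop := inC0 eps (x * y^-1).

(* Representative in B of D(gamma) for gamma of size n.+1. *)
Fixpoint Drep (B : unitRingType) (n : nat) : 'M[B]_n.+1 -> B :=
  match n return 'M[B]_n.+1 -> B with
  | 0 => fun M => M ord0 ord0
  | k.+1 => fun M =>
      let M' : 'M[B]_(1 + k.+1) := M in
      let g11 := ulsubmx M' ord0 ord0 in
      g11 * Drep (drsubmx M' - dlsubmx M' *m (g11^-1 *: ursubmx M'))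
  end.

(* Main.v *)
Require Import Defs.
From HB Require Import structures.
From mathcomp Require Import all_boot all_order all_algebra.
Set Implicit Arguments. Unset Strict Implicit. Unset Printing Implicit Defensive.
Import GRing.Theory.
Local Open Scope ring_scope.

Definition mat (B : unitRingType) n (f : nat -> nat -> B) : 'M[B]_n.+1 :=
  \matrix_(i, j) f (i : nat) (j : nat).

Lemma DrepS_fun (B : unitRingType) n (f : nat -> nat -> B) :
  Drep (mat n.+1 f) = f 0%N 0%N * Drep (mat n (fun i j =>
     f i.+1 j.+1 - f i.+1 0%N * (f 0%N 0%N)^-1 * f 0%N j.+1)).
Proof.
rewrite [LHS]/=.
have -> : ulsubmx (mat n.+1 f : 'M_(1 + n.+1)) ord0 ord0 = f 0%N 0%N by rewrite !mxE.
congr (_ * Drep _); apply/matrixP => i j.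
rewrite !mxE big_ord1 !mxE /= mulrA.
by [].
Qed.

Definition blockf (B : unitRingType) k (af bf : nat -> nat -> B) i j : B :=
  if (i < k)%N then (if (j < k)%N then af i j else 0)
  else (if (j < k)%N then 0 else bf (i - k)%N (j - k)%N).

Lemma Drep_cong (B : unitRingType) n (f g : nat -> nat -> B) :
  (forall i j, f i j = g i j) -> Drep (mat n f) = Drep (mat n g).
Proof. by move=> H; congr Drep; apply/matrixP => i j; rewrite !mxE H. Qed.

Lemma Drep_block (B : unitRingType) m k (af bf : nat -> nat -> B) :
  Drep (n := k + m.+1) (mat (k + m.+1) (blockf k.+1 af bf)) = Drep (mat k af) * Drep (mat m bf).
Proof.
elim: k af => [|k IH] af.
  rewrite add0n DrepS_fun /= mxE; f_equal.
  apply: Drep_cong => i j; rewrite /blockf /= !subn1 /=. by rewrite ?mulr0 ?mul0r ?subr0.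
rewrite addSn !DrepS_fun -mulrA.
f_equal.
rewrite -IH; apply: Drep_cong => i j; rewrite /blockf /= !ltnS.
by case: (i <= k)%N; case: (j <= k)%N; rewrite ?subSS ?mulr0 ?mul0r ?subr0.
Qed.
Lemma unit_of_eps (B : unitRingType) (A : nzRingType)
    (eps : {rmorphism B -> A}) (j : {rmorphism A -> B}) :
  local_augmentation eps j -> forall x, eps x = 1 -> x \is a GRing.unit.
Proof.
move=> [_ loc] x ex.
have [N [h1 h2]] : mx_invertible (\matrix_(i < 1, k < 1) x).
  apply: loc; exists 1%:M; rewrite mul1mx mulmx1; split=> //;
  by apply/matrixP => i k; rewrite !ord1 !mxE ex.
apply/unitrP; exists (N ord0 ord0); split.
  by move/matrixP: h2 => /(_ ord0 ord0); rewrite !mxE big_ord1 mxE.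
by move/matrixP: h1 => /(_ ord0 ord0); rewrite !mxE big_ord1 mxE.
Qed.

Lemma Drep_eps (B : unitRingType) (A : nzRingType)
    (eps : {rmorphism B -> A}) n (f : nat -> nat -> B) :
  (forall i k, (i <= n)%N -> (k <= n)%N -> eps (f i k) = (i == k)%:R) ->
  eps (Drep (mat n f)) = 1.
Proof.
elim: n f => [|n IH] f H.
  by rewrite /= mxE H.
rewrite DrepS_fun rmorphM H // mul1r; apply: IH => i k hi hk.
by rewrite rmorphB !rmorphM !H // eqSS ?mulr0 ?mul0r ?subr0.
Qed.

Lemma mat_of (B : unitRingType) n (M : 'M[B]_n.+1) :
  M = mat n (fun i k => M (inord i) (inord k)).
Proof. by apply/matrixP => i k; rewrite mxE !inord_val. Qed.

Lemma splitL a b (x : 'I_a) : split (lshift b x) = inl x.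
Proof. exact: (unsplitK (inl _ x)). Qed.
Lemma splitR a b (x : 'I_b) : split (rshift a x) = inr x.
Proof. exact: (unsplitK (inr _ x)). Qed.

Lemma block_mat (B : unitRingType) n m (alpha : 'M[B]_n.+1) (beta : 'M[B]_m.+1) :
  block_mx alpha 0 0 beta = mat (n + m.+1)
    (blockf n.+1 (fun i k => alpha (inord i) (inord k))
                 (fun i k => beta (inord i) (inord k))) :> 'M_(n.+1 + m.+1).
Proof.
apply/matrixP => i k; rewrite mxE /blockf.
case: (split_ordP i) => i' ->; case: (split_ordP k) => k' ->;
  rewrite ?block_mxEul ?block_mxEur ?block_mxEdl ?block_mxEdr ?mxE /=
     ?splitL ?splitR ?mxE ?ltn_ord ?ltnNge ?leq_addr /= ?addKn ?inord_val //.
Qed.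

Lemma Drep_eps1 (B : unitRingType) (A : nzRingType)
    (eps : {rmorphism B -> A}) n (M : 'M[B]_n.+1) :
  map_mx eps M = 1%:M -> eps (Drep M) = 1.
Proof.
move=> H; rewrite (mat_of M); apply: Drep_eps => i k hi hk.
move/matrixP: H => /(_ (inord i) (inord k)); rewrite !mxE => ->.
by rewrite -(inj_eq val_inj) /= !inordK.
Qed.

Theorem lemma4p4 (B : unitRingType) (A : nzRingType)
    (eps : {rmorphism B -> A}) (j : {rmorphism A -> B})
    (n m : nat) (alpha : 'M[B]_n.+1) (beta : 'M[B]_m.+1) :
  local_augmentation eps j ->
  mx_invertible alpha -> mx_invertible beta ->
  map_mx eps alpha = 1%:M -> map_mx eps beta = 1%:M ->
  eqC0 eps (Drep (n := n + m.+1) (block_mx alpha 0 0 beta))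
           (Drep alpha * Drep beta).
Proof.
move=> loc _ _ ha hb.
have E : Drep (n := n + m.+1) (block_mx alpha 0 0 beta) = Drep alpha * Drep beta.
  by rewrite block_mat Drep_block -(mat_of alpha) -(mat_of beta).
rewrite /eqC0 E mulrV; first exact: C0_one.
rewrite unitrMl; apply: (unit_of_eps loc); exact: Drep_eps1.
Qed.
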